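(* There exist constants $C_1,C_2>0$ such that for all $(\lambda,\zeta)\in\mathbb{S}\times(\mathbb{Z}^2\setminus\{0\})$, $$\frac{C_1}{\langle\omega\rangle^2}\le\Big|\int_0^a(\omega^2-\nu\partial_{zz})^{-1}(1)\,dz\Big|\le\frac{C_2}{\langle\omega\rangle^2},$$ where $(\omega^2-\nu\partial_{zz})^{-1}(1)$ denotes the solution $g$ on $(0,a)$ of $\omega^2g-\nu g''=1$, $g(0)=g(a)=0$.
   Context: Fix $a>0$, $\nu>0$, $\alpha\in\mathbb{R}$, $\beta,\gamma>0$, $\Omega=\mathbb{T}^2\times(0,a)$, $\mathbb{T}^2=(\mathbb{R}/2\pi\mathbb{Z})^2$. Let $\mathcal{V}=\mathcal{V}_1\times\mathcal{V}_2$, where $\mathcal{V}_1$ is the closure in $H^1(\Omega)^2$ of smooth $(u,v)$ periodic in $x,y$, vanishing at $z=0,a$, with $\int_0^a(\partial_xu+\partial_yv)dz=0$, and $\mathcal{V}_2$ the closure in $H^1(\Omega)$ of smooth $\theta$ periodic in $x,y$ vanishing at $z=0,a$. For $X=(u,v,\theta),X'=(u',v',\theta')\in\mathcal{V}$ put $(X,X')_{\mathcal{H}}=\int_\Omega(u\bar u'+v\bar v'+\frac\beta\gamma\theta\bar\theta')$, $(X,X')_{\mathcal{V}}=\int_\Omega(\nabla u\cdot\nabla\bar u'+\nabla v\cdot\nabla\bar v'+\frac\beta\gamma\nabla\theta\cdot\nabla\bar\theta')$, $w=-\int_0^z(\partial_xu+\partial_yv)$, $w'=-\int_0^z(\partial_xu'+\partial_yv')$,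 $B(X,X')=-\int_\Omega\theta\bar w'+\int_\Omega w\bar\theta'$, $C(X,X')=-\int_\Omega v\bar u'+\int_\Omega u\bar v'$, $\langle PX,X'\rangle=\nu(X,X')_{\mathcal{V}}+\beta B(X,X')+\alpha C(X,X')$, and $\mathbb{V}_P=\{\lambda\in\mathbb{C}:\exists X\in\mathcal{V}\setminus\{0\},\ \lambda(X,X')_{\mathcal{H}}+\langle PX,X'\rangle=0\ \forall X'\in\mathcal{V}\}$. Let $\mathbb{S}=\{-\delta_2-\mu_1+i\mu_2:(\mu_1,\mu_2)\in\mathbb{R}^2,\ |\mu_2|\ge\mu_1/\delta_1\}$, where $\delta_1>0$ is small enough that $\mathbb{S}\cap\mathbb{V}_P=\emptyset$ and $\delta_2<\min(\frac{\nu\pi^2}{2a^2},\frac\nu2)$. For $\lambda\in\mathbb{S}$, $\zeta\in\mathbb{Z}^2$: $\omega^2=\lambda+\nu|\zeta|^2$, $\langle\zeta\rangle=1+|\zeta|$, $\langle\omega\rangle^2=|\lambda|+\langle\zeta\rangle^2$. *)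

(* Defs.v *)
From Stdlib Require Import Reals.
From Coquelicot Require Import Coquelicot.
Open Scope R_scope.

Definition in_S (d1 d2 : R) (lam : C) : Prop :=
  exists mu1 mu2 : R, lam = ((- d2 - mu1)%R, mu2) /\ Rabs mu2 >= mu1 / d1.

Definition zeta_sq (z1 z2 : Z) : R := (IZR z1) ^ 2 + (IZR z2) ^ 2.

Definition jzeta (z1 z2 : Z) : R := 1 + sqrt (zeta_sq z1 z2).

Definition omega2 (nu : R) (lam : C) (z1 z2 : Z) : C :=
  (lam + RtoC (nu * zeta_sq z1 z2))%C.

Definition jomega2 (lam : C) (z1 z2 : Z) : R :=
  Cmod lam + (jzeta z1 z2) ^ 2.

Definition dirichlet_sol (a nu : R) (w2 : C) (g : R -> C) : Prop :=
  (forall z, 0 <= z <= a -> continuous g z) /\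
  g 0 = RtoC 0 /\ g a = RtoC 0 /\
  exists g1 g2 : R -> C,
    forall z, 0 < z < a ->
      is_derive g z (g1 z) /\ is_derive g1 z (g2 z) /\
      (w2 * g z - RtoC nu * g2 z)%C = RtoC 1.

Definition cint (a : R) (g : R -> C) : C :=
  @RInt C_R_CompleteNormedModule g 0 a.

(* Main.v *)
Require Import Defs.
From Stdlib Require Import Reals Lra Lia.
From Coquelicot Require Import Coquelicot.
Open Scope R_scope.

Lemma rint_zero_deriv (f df : R -> R) (a : R) :
  (forall x, is_derive f x (df x)) -> (forall x, continuous df x) ->
  f 0 = 0 -> f a = 0 -> RInt df 0 a = 0.
Proof.
  intros Hd Hc H0 Ha.
  rewrite (is_RInt_unique _ _ _ _ (is_RInt_derive (V:=R_CompleteNormedModule) f df 0 a (fun x _ => Hd x) (fun x _ => Hc x))).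
  rewrite H0, Ha; unfold minus, plus, opp; simpl; ring.
Qed.

Lemma contR (f : R -> R) x : ex_derive f x -> continuous f x.
Proof. apply (ex_derive_continuous (K:=R_AbsRing) (V:=R_NormedModule)). Qed.

Lemma RIntP (f g : R -> R) a : (forall x, continuous f x) -> (forall x, continuous g x) ->
  RInt (fun x => f x + g x) 0 a = RInt f 0 a + RInt g 0 a.
Proof. intros. apply (RInt_plus (V:=R_CompleteNormedModule)); apply ex_RInt_continuous; auto. Qed.

Lemma RIntS (f : R -> R) c a : (forall x, continuous f x) ->
  RInt (fun x => c * f x) 0 a = c * RInt f 0 a.
Proof. intros. apply (RInt_scal (V:=R_CompleteNormedModule)); apply ex_RInt_continuous; auto. Qed.

Lemma rint_deriv (f df : R -> R) (a : R) :
  (forall x, is_derive f x (df x)) -> (forall x, continuous df x) ->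
  RInt df 0 a = f a - f 0.
Proof.
  intros Hd Hc.
  rewrite (is_RInt_unique _ _ _ _ (is_RInt_derive (V:=R_CompleteNormedModule) f df 0 a (fun x _ => Hd x) (fun x _ => Hc x))).
  reflexivity.
Qed.

Lemma RIntLe (f g : R -> R) a : 0 <= a -> (forall x, continuous f x) -> (forall x, continuous g x) ->
  (forall x, 0 < x < a -> f x <= g x) -> RInt f 0 a <= RInt g 0 a.
Proof. intros. apply RInt_le; auto; apply (ex_RInt_continuous (V:=R_CompleteNormedModule)); auto. Qed.

Section Abs.
Variables (a nu p q : R) (u v u1 v1 u2 v2 u3 v3 : R -> R).
Hypothesis Du : forall x, is_derive u x (u1 x).
Hypothesis Du1 : forall x, is_derive u1 x (u2 x).
Hypothesis Du2 : forall x, is_derive u2 x (u3 x).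
Hypothesis Dv : forall x, is_derive v x (v1 x).
Hypothesis Dv1 : forall x, is_derive v1 x (v2 x).
Hypothesis Dv2 : forall x, is_derive v2 x (v3 x).
Hypothesis Eu : forall x, p*u x - q*v x - nu*u2 x = 1.
Hypothesis Ev : forall x, p*v x + q*u x - nu*v2 x = 0.
Hypothesis B0u : u 0 = 0.
Hypothesis B0v : v 0 = 0.
Hypothesis Bau : u a = 0.
Hypothesis Bav : v a = 0.

Lemma exu x : ex_derive u x. Proof. eexists; apply Du. Qed.
Lemma exu1 x : ex_derive u1 x. Proof. eexists; apply Du1. Qed.
Lemma exu2 x : ex_derive u2 x. Proof. eexists; apply Du2. Qed.
Lemma exv x : ex_derive v x. Proof. eexists; apply Dv. Qed.
Lemma exv1 x : ex_derive v1 x. Proof. eexists; apply Dv1. Qed.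
Lemma exv2 x : ex_derive v2 x. Proof. eexists; apply Dv2. Qed.

Ltac exd := repeat split; auto using exu, exu1, exu2, exv, exv1, exv2.
Ltac dv := rewrite ?(is_derive_unique _ _ _ (Du _)), ?(is_derive_unique _ _ _ (Du1 _)),
  ?(is_derive_unique _ _ _ (Du2 _)), ?(is_derive_unique _ _ _ (Dv _)),
  ?(is_derive_unique _ _ _ (Dv1 _)), ?(is_derive_unique _ _ _ (Dv2 _)).


Ltac cont := intros; apply contR; auto_derive; exd.

Lemma A1 : RInt (fun x => p*(u x^2+v x^2) + nu*(u1 x^2+v1 x^2)) 0 a = RInt u 0 a.
Proof.
  rewrite (RInt_ext _ (fun x => u x + nu*(u1 x ^2 + u x * u2 x + v1 x^2 + v x * v2 x))).
  2:{ intros x _. assert (H1 := f_equal (fun t => u x * t) (Eu x)).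
      assert (H2 := f_equal (fun t => v x * t) (Ev x)). simpl in H1, H2. nra. }
  rewrite RIntP by cont.
  rewrite (rint_zero_deriv (fun x => nu * (u x * u1 x + v x * v1 x)) (fun x => nu*(u1 x ^2 + u x * u2 x + v1 x^2 + v x * v2 x))).
  - apply Rplus_0_r.
  - intros x. auto_derive. exd. dv. ring.
  - cont.
  - rewrite B0u, B0v; ring.
  - rewrite Bau, Bav; ring.
Qed.

Lemma A2 : RInt (fun x => -q*(u x^2+v x^2)) 0 a = RInt v 0 a.
Proof.
  rewrite (RInt_ext _ (fun x => v x + nu*(v x * u2 x - u x * v2 x))).
  2:{ intros x _. assert (H1 := f_equal (fun t => v x * t) (Eu x)).
      assert (H2 := f_equal (fun t => u x * t) (Ev x)). simpl in H1, H2. nra. }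
  rewrite RIntP by cont.
  rewrite (rint_zero_deriv (fun x => nu * (v x * u1 x - u x * v1 x)) (fun x => nu*(v x * u2 x - u x * v2 x))).
  - change (@eq R (RInt v 0 a + 0) (RInt v 0 a)); ring.
  - intros x. auto_derive. exd. dv. ring.
  - cont.
  - rewrite B0u, B0v; ring.
  - rewrite Bau, Bav; ring.
Qed.

Lemma A3 : RInt (fun x => x*(a-x)*(p*u x - q*v x)) 0 a + 2*nu*RInt u 0 a = a^3/6.
Proof.
  rewrite (RInt_ext _ (fun x => (x*(a-x) + (-2*nu) * u x) + nu*((a-2*x)*u1 x + x*(a-x)*u2 x + 2 * u x - (a-2*x)*u1 x))).
  2:{ intros x _. assert (H1 := f_equal (fun t => x*(a-x) * t) (Eu x)). simpl in H1. nra. }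
  rewrite RIntP by cont.
  rewrite RIntP by cont.
  rewrite RIntS by cont.
  rewrite (rint_zero_deriv (fun x => nu * (x*(a-x) * u1 x - (a-2*x) * u x)) (fun x => nu*((a-2*x)*u1 x + x*(a-x)*u2 x + 2 * u x - (a-2*x)*u1 x))).
  - rewrite (rint_deriv (fun x => a*x^2/2 - x^3/3) (fun x => x*(a-x))).
    + field.
    + intros x. auto_derive. auto. field.
    + cont.
  - intros x. auto_derive. exd. dv. ring.
  - cont.
  - rewrite B0u; ring.
  - rewrite Bau; ring.
Qed.

Lemma contu x : continuous u x. Proof. cont. Qed.
Lemma contv x : continuous v x. Proof. cont. Qed.

Definition XX := RInt (fun x => u x^2+v x^2) 0 a.
Definition YY := RInt (fun x => u1 x^2+v1 x^2) 0 a.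

Lemma L1 : p * XX + nu * YY = RInt u 0 a.
Proof.
  rewrite <- A1. unfold XX, YY.
  rewrite (RIntP (fun x => p*(u x^2+v x^2)) (fun x => nu*(u1 x^2+v1 x^2))) by cont. rewrite (RIntS (fun x => u x^2+v x^2)) by cont.
  rewrite (RIntS (fun x => u1 x^2+v1 x^2)) by cont. reflexivity.
Qed.

Lemma L2 : - q * XX = RInt v 0 a.
Proof.
  rewrite <- A2. unfold XX. rewrite (RIntS (fun x => u x^2+v x^2)) by cont. reflexivity.
Qed.

Hypothesis ha : 0 < a.
Hypothesis hnu : 0 < nu.

Lemma L3 : 0 <= XX.
Proof. unfold XX. apply RInt_ge_0. lra. apply (ex_RInt_continuous (V:=R_CompleteNormedModule)). intros; cont.
  intros; nra. Qed.
Lemma L4 : 0 <= YY.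
Proof. unfold YY. apply RInt_ge_0. lra. apply (ex_RInt_continuous (V:=R_CompleteNormedModule)). intros; cont.
  intros; nra. Qed.

Lemma ptw1 su x t : su^2 = 1 -> 0 < t -> su * x <= t * x^2 + /(4*t).
Proof.
  intros Hs Ht.
  assert (E : su * x - t * x^2 = (su^2 - (2*t*x - su)^2) / (4*t)) by (field; lra).
  rewrite Hs in E.
  assert (0 <= (2*t*x - su)^2) by apply pow2_ge_0.
  assert ((1 - (2*t*x - su)^2) / (4*t) <= /(4*t)).
  { unfold Rdiv. assert (0 < /(4*t)) by (apply Rinv_0_lt_compat; lra). nra. }
  lra.
Qed.

Lemma Lup t : 0 < t -> Rabs (RInt u 0 a) + Rabs (RInt v 0 a) <= t * XX + a / t.
Proof.
  intros Ht.
  assert (Hs : forall r, exists s, s^2 = 1 /\ Rabs r = s * r).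
  { intros r. destruct (Rle_dec 0 r). exists 1. split. ring. rewrite Rabs_right; lra.
    exists (-1). split. ring. rewrite Rabs_left; lra. }
  destruct (Hs (RInt u 0 a)) as [su [Hsu Eu']]. destruct (Hs (RInt v 0 a)) as [sv [Hsv Ev']].
  rewrite Eu', Ev'.
  rewrite <- (RIntS u su) by apply contu. rewrite <- (RIntS v sv) by apply contv.
  rewrite <- RIntP by (intros; cont).
  unfold XX. rewrite <- (RIntS (fun x => u x^2+v x^2)) by cont.
  replace (a / t) with (RInt (fun _ => /t) 0 a).
  2:{ rewrite RInt_const. unfold scal; simpl. unfold mult; simpl. field. lra. }
  rewrite <- RIntP by (intros; cont).
  apply RIntLe. lra. cont. cont.
  intros x _.
  assert (H1 := ptw1 su (u x) t Hsu Ht). assert (H2 := ptw1 sv (v x) t Hsv Ht).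
  assert (/(4*t) + /(4*t) <= /t).
  { replace (/(4*t) + /(4*t)) with (/ t * / 2) by (field; lra).
    assert (0 < /t) by (apply Rinv_0_lt_compat; lra). nra. }
  lra.
Qed.

Lemma ptw2 (c f x : R) : 0 < c -> f * x <= c * x^2 + f^2 / (4*c).
Proof.
  intros Hc.
  assert (E : f * x - c * x^2 = (f^2 - (f - 2*c*x)^2) / (4*c)) by (field; lra).
  assert (0 <= (f - 2*c*x)^2) by apply pow2_ge_0.
  assert ((f^2 - (f - 2*c*x)^2) / (4*c) <= f^2/(4*c)).
  { unfold Rdiv. apply Rmult_le_compat_r. left; apply Rinv_0_lt_compat; lra. lra. }
  lra.
Qed.

Lemma Llow : 0 < p^2 + q^2 -> a^3/12 <= 3*a^2/16*(p^2+q^2)*XX + 2*nu*Rabs (RInt u 0 a).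
Proof.
  intros HQ.
  set (Q := p^2+q^2) in *.
  set (c := 3*a^2/16*Q).
  assert (Ha2 : 0 < a^2) by (apply pow_lt; lra).
  assert (Hc : 0 < c) by (unfold c; unfold Rdiv; apply Rmult_lt_0_compat; [|exact HQ]; lra).
  assert (H := A3).
  assert (Hle : RInt (fun x => x*(a-x)*(p*u x - q*v x)) 0 a <= c * XX + a^3/12).
  { unfold XX. rewrite <- (RIntS (fun x => u x^2+v x^2)) by cont.
    replace (a^3/12) with (RInt (fun _ => a^2/12) 0 a).
    2:{ rewrite RInt_const. unfold scal; simpl. unfold mult; simpl. field. }
    rewrite <- RIntP by (intros; cont).
    apply RIntLe. lra. cont. cont.
    intros x Hx.
    assert (Hphi0 : 0 <= x*(a-x)) by nra.
    assert (Hphi1 : x*(a-x) <= a^2/4) by (assert (0 <= (a-2*x)^2) by apply pow2_ge_0; nra).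
    assert (H1 := ptw2 c (x*(a-x)*p) (u x) Hc).
    assert (H2 := ptw2 c (-(x*(a-x)*q)) (v x) Hc).
    assert (H3 : (x*(a-x)*p)^2/(4*c) + (-(x*(a-x)*q))^2/(4*c) <= a^2/12).
    { replace ((x*(a-x)*p)^2/(4*c) + (-(x*(a-x)*q))^2/(4*c)) with ((x*(a-x))^2 * Q / (4*c)) by (unfold Q; field; lra).
      replace (a^2/12) with ((a^2/4)^2 * Q / (4*c)) by (unfold c; field; split; lra).
      unfold Rdiv. apply Rmult_le_compat_r. left; apply Rinv_0_lt_compat; lra.
      apply Rmult_le_compat_r. unfold Q; nra. nra. }
    nra. }
  assert (Rabs (RInt u 0 a) >= RInt u 0 a) by (apply Rle_ge, Rle_abs).
  assert (2*nu*Rabs (RInt u 0 a) >= 2*nu*RInt u 0 a) by nra.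
  unfold c in *. lra.
Qed.

Variable d1 : R.
Hypothesis hd1 : 0 < d1.
Hypothesis hsec : p < 0 -> - p <= d1 * Rabs q.

Lemma Lsec : (Rabs p + Rabs q) * XX <= (1+d1) * (Rabs (RInt u 0 a) + Rabs (RInt v 0 a)).
Proof.
  assert (HX := L3). assert (HY := L4). assert (H1 := L1). assert (H2 := L2).
  assert (Hv : Rabs q * XX = Rabs (RInt v 0 a)).
  { rewrite <- H2. rewrite Rabs_mult, (Rabs_right XX) by lra. rewrite Rabs_Ropp. reflexivity. }
  assert (0 <= Rabs (RInt u 0 a)) by apply Rabs_pos.
  assert (0 <= Rabs (RInt v 0 a)) by apply Rabs_pos.
  destruct (Rle_dec 0 p).
  - rewrite Rabs_right by lra.
    assert (p * XX <= Rabs (RInt u 0 a)).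
    { apply Rle_trans with (RInt u 0 a). nra. apply Rle_abs. }
    nra.
  - rewrite Rabs_left by lra.
    specialize (hsec ltac:(lra)).
    assert (- p * XX <= d1 * Rabs q * XX) by nra.
    nra.
Qed.

Lemma Cup : 0 < Rabs p + Rabs q ->
  Rabs (RInt u 0 a) + Rabs (RInt v 0 a) <= 4*a*(1+d1) / (Rabs p + Rabs q).
Proof.
  intros HP. set (P := Rabs p + Rabs q) in *.
  set (S := Rabs (RInt u 0 a) + Rabs (RInt v 0 a)).
  assert (Ht : 0 < P / (2*(1+d1))) by (apply Rdiv_lt_0_compat; lra).
  assert (H := Lup _ Ht). fold S in H.
  assert (H2 := Lsec). fold S in H2. fold P in H2.
  replace (P / (2 * (1 + d1)) * XX) with (P * XX / (2*(1+d1))) in H by (field; lra).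
  replace (a / (P / (2 * (1 + d1)))) with (2*a*(1+d1)/P) in H by (field; lra).
  assert (P * XX / (2 * (1 + d1)) <= S/2).
  { apply Rmult_le_reg_r with (2*(1+d1)). lra. unfold Rdiv. rewrite Rmult_assoc, Rinv_l by lra. nra. }
  replace (4*a*(1+d1)/P) with (2 * (2*a*(1+d1)/P)) by (field; lra).
  lra.
Qed.

Lemma Clow : 0 < Rabs p + Rabs q ->
  a^3/12 <= (3*a^2/16*(1+d1)*(Rabs p + Rabs q) + 2*nu) * (Rabs (RInt u 0 a) + Rabs (RInt v 0 a)).
Proof.
  intros HP. set (P := Rabs p + Rabs q) in *.
  set (S := Rabs (RInt u 0 a) + Rabs (RInt v 0 a)).
  assert (HQ : 0 < p^2+q^2).
  { destruct (Rlt_or_le 0 (p^2+q^2)) as [h|h]; auto.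
    assert (E1 : p = 0) by nra. assert (E2 : q = 0) by nra. unfold P in HP. rewrite E1, E2, Rabs_R0 in HP. lra. }
  assert (H := Llow HQ).
  assert (H2 := Lsec). fold S P in H2.
  assert (HX := L3).
  assert (HQP : p^2+q^2 <= P * P).
  { unfold P. rewrite <- (pow2_abs p), <- (pow2_abs q). assert (0 <= Rabs p) by apply Rabs_pos.
    assert (0 <= Rabs q) by apply Rabs_pos. nra. }
  assert (0 <= Rabs (RInt v 0 a)) by apply Rabs_pos.
  assert (Rabs (RInt u 0 a) <= S) by (unfold S; lra).
  assert ((p^2+q^2)*XX <= P * ((1+d1)*S)) by nra.
  assert (0 < a^2) by nra.
  nra.
Qed.
End Abs.

Lemma derC_fst (f : R -> C) x l : is_derive f x l -> is_derive (fun t => fst (f t)) x (fst l).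
Proof.
  intros H. unfold is_derive in *.
  apply (filterdiff_comp f (fun z : C_R_NormedModule => fst z) (fun y => scal y l) (fun z : C_R_NormedModule => fst z) H).
  apply filterdiff_linear. apply is_linear_fst.
Qed.

Lemma derC_snd (f : R -> C) x l : is_derive f x l -> is_derive (fun t => snd (f t)) x (snd l).
Proof.
  intros H. unfold is_derive in *.
  apply (filterdiff_comp f (fun z : C_R_NormedModule => snd z) (fun y => scal y l) (fun z : C_R_NormedModule => snd z) H).
  apply filterdiff_linear. apply is_linear_snd.
Qed.

Lemma derC_pair (f g : R -> R) x a b : is_derive f x a -> is_derive g x b ->
  is_derive (fun t => (f t, g t) : C) x ((a, b) : C).
Proof.
  intros Hf Hg. unfold is_derive in *.
  apply (filterdiff_comp_2 (U:=R_NormedModule) (V:=R_NormedModule) (W:=C_R_NormedModule) f g (fun x y => (x,y)) _ _ (fun x y => (x,y)) Hf Hg).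
  apply filterdiff_linear.
  apply (is_linear_prod (T:=prod_NormedModule R_AbsRing R_NormedModule R_NormedModule) (U:=R_NormedModule) (V:=R_NormedModule)).
  apply is_linear_fst. apply is_linear_snd.
Qed.

Lemma is_derive_val {V : NormedModule R_AbsRing} (f : R -> V) x l l' : is_derive f x l -> l = l' -> is_derive f x l'.
Proof. intros H E; subst; auto. Qed.

Lemma derR_mult (f g : R -> R) x a b : is_derive f x a -> is_derive g x b ->
  is_derive (fun t => f t * g t) x (a * g x + f x * b).
Proof. intros. apply (is_derive_mult (K:=R_AbsRing)); auto. apply Rmult_comm. Qed.

Lemma derR_plus (f g : R -> R) x a b : is_derive f x a -> is_derive g x b ->
  is_derive (fun t => f t + g t) x (a + b).
Proof. intros. apply (is_derive_plus (K:=R_AbsRing) (V:=R_NormedModule)); auto. Qed.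

Lemma derR_minus (f g : R -> R) x a b : is_derive f x a -> is_derive g x b ->
  is_derive (fun t => f t - g t) x (a - b).
Proof. intros. apply (is_derive_minus (K:=R_AbsRing) (V:=R_NormedModule)); auto. Qed.

Open Scope C_scope.

Lemma Ceq (z w : C) : fst z = fst w -> snd z = snd w -> z = w.
Proof. intros; apply injective_projections; auto. Qed.

Lemma derC_mult (f g : R -> C) x a b : is_derive f x a -> is_derive g x b ->
  is_derive (fun t => f t * g t) x (a * g x + f x * b).
Proof.
  intros Hf Hg.
  apply is_derive_ext with (fun t => ((fst (f t) * fst (g t) - snd (f t) * snd (g t))%R,
                                     (fst (f t) * snd (g t) + snd (f t) * fst (g t))%R)).
  { intros t. reflexivity. }
  eapply is_derive_val.
  apply derC_pair.
  apply derR_minus; apply derR_mult.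
  apply (derC_fst _ _ _ Hf). apply (derC_fst _ _ _ Hg). apply (derC_snd _ _ _ Hf). apply (derC_snd _ _ _ Hg).
  apply derR_plus; apply derR_mult.
  apply (derC_fst _ _ _ Hf). apply (derC_snd _ _ _ Hg). apply (derC_snd _ _ _ Hf). apply (derC_fst _ _ _ Hg).
  apply Ceq; unfold Cmult, Cplus; simpl; ring.
Qed.

Lemma derC_plus (f g : R -> C) x a b : is_derive f x a -> is_derive g x b ->
  is_derive (fun t => f t + g t) x (a + b).
Proof.
  intros Hf Hg.
  apply is_derive_ext with (fun t => ((fst (f t) + fst (g t))%R, (snd (f t) + snd (g t))%R)).
  { intros t. reflexivity. }
  apply derC_pair; apply derR_plus.
  apply (derC_fst _ _ _ Hf). apply (derC_fst _ _ _ Hg). apply (derC_snd _ _ _ Hf). apply (derC_snd _ _ _ Hg).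
Qed.

Lemma derC_const (c : C) x : is_derive (fun _ : R => c) x (RtoC 0).
Proof.
  apply is_derive_ext with (fun t => (fst c, snd c)). { intros; destruct c; reflexivity. }
  apply derC_pair; apply (is_derive_const (K:=R_AbsRing) (V:=R_NormedModule)).
Qed.

Lemma derC_cmul (c : C) (f : R -> C) x a : is_derive f x a -> is_derive (fun t => c * f t) x (c * a).
Proof.
  intros H. eapply is_derive_val. apply (derC_mult (fun _ => c) f x (RtoC 0) a (derC_const c x) H).
  apply Ceq; unfold Cmult, Cplus; simpl; ring.
Qed.

Definition cexp (k : C) (t : R) : C :=
  ((exp (fst k * t) * cos (snd k * t))%R, (exp (fst k * t) * sin (snd k * t))%R).

Lemma derC_exp k x : is_derive (cexp k) x (k * cexp k x).
Proof.
  unfold cexp. eapply is_derive_val. apply derC_pair; auto_derive; auto.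
  apply Ceq; unfold Cmult, Cplus; simpl; ring.
Qed.

Lemma cexp_inv k t : cexp k t * cexp (- k) t = RtoC 1.
Proof.
  unfold cexp. apply Ceq; simpl.
  - replace (- fst k * t)%R with (- (fst k * t))%R by ring.
    replace (- snd k * t)%R with (- (snd k * t))%R by ring.
    rewrite cos_neg, sin_neg, exp_Ropp.
    assert (exp (fst k * t) <> 0)%R by (apply Rgt_not_eq, exp_pos).
    assert (Hsc := sin2_cos2 (snd k * t)). unfold Rsqr in Hsc.
    field_simplify; auto. rewrite <- Hsc; ring. auto.
  - replace (- fst k * t)%R with (- (fst k * t))%R by ring.
    replace (- snd k * t)%R with (- (snd k * t))%R by ring.
    rewrite cos_neg, sin_neg, exp_Ropp.
    assert (exp (fst k * t) <> 0)%R by (apply Rgt_not_eq, exp_pos).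
    field. auto.
Qed.

Open Scope C_scope.

Definition Q (k c0 c1 c2 : C) (z : R) : C := c0 + c1 * cexp k z + c2 * cexp (- k) z.

Lemma dQ k c0 c1 c2 z : is_derive (Q k c0 c1 c2) z (Q k (RtoC 0) (k * c1) (- k * c2) z).
Proof.
  unfold Q. eapply is_derive_val.
  apply derC_plus. apply derC_plus. apply derC_const.
  apply derC_cmul. apply derC_exp. apply derC_cmul. apply derC_exp.
  apply Ceq; unfold Cmult, Cplus, Copp; simpl; ring.
Qed.

Lemma Q_eq k w nu c1 c2 z : w <> RtoC 0 -> RtoC nu * (k * k) = w ->
  w * Q k (/ w) c1 c2 z - RtoC nu * Q k (RtoC 0) (k * (k * c1)) (- k * (- k * c2)) z = RtoC 1.
Proof.
  intros Hw Hk. unfold Q.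
  replace (RtoC nu * (RtoC 0 + k * (k * c1) * cexp k z + - k * (- k * c2) * cexp (- k) z))
    with ((RtoC nu * (k * k)) * (c1 * cexp k z + c2 * cexp (-k) z)) by ring.
  rewrite Hk. field. auto.
Qed.

Lemma RtoC_neq0 r : r <> 0%R -> RtoC r <> RtoC 0.
Proof. intros H E. apply H. apply (f_equal fst) in E. exact E. Qed.

Lemma const_on (F : R -> C) a : (0 < a)%R -> (forall z, (0 < z < a)%R -> is_derive F z zero) ->
  forall z, (0 < z < a)%R -> F z = F (a/2)%R.
Proof.
  intros ha HF z Hz.
  destruct (Rlt_or_le z (a/2)) as [h|h].
  - apply (eq_is_derive (V:=C_R_NormedModule)); auto. intros t Ht. apply HF. lra.
  - destruct h as [h|h]. symmetry. apply (eq_is_derive (V:=C_R_NormedModule)); auto. intros t Ht. apply HF. lra.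
    subst; reflexivity.
Qed.

Lemma rep (a nu : R) (w k : C) (g g1 g2 : R -> C) :
  (0 < a)%R -> nu <> 0%R -> w <> RtoC 0 -> k <> RtoC 0 -> RtoC nu * (k * k) = w ->
  (forall z, (0 < z < a)%R -> is_derive g z (g1 z) /\ is_derive g1 z (g2 z) /\
      (w * g z - RtoC nu * g2 z)%C = RtoC 1) ->
  exists c1 c2, forall z, (0 < z < a)%R -> g z = Q k (/ w) c1 c2 z.
Proof.
  intros ha hnu hw hk hkk Hd.
  assert (hnuC := RtoC_neq0 _ hnu).
  assert (h2 : RtoC 2 <> RtoC 0) by (apply RtoC_neq0; lra).
  set (F := fun z => (g1 z + k * (g z - / w)) * cexp (- k) z).
  set (F2 := fun z => (g1 z + (- k) * (g z - / w)) * cexp k z).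
  assert (Hg2 : forall z, (0 < z < a)%R -> g2 z = (w * g z - RtoC 1) / RtoC nu).
  { intros z Hz. destruct (Hd z Hz) as [_ [_ H3]]. rewrite <- H3. field. auto. }
  assert (DF : forall z, (0 < z < a)%R -> is_derive F z zero).
  { intros z Hz. destruct (Hd z Hz) as [H1 [H2 H3]]. unfold F. eapply is_derive_val.
    apply derC_mult. apply derC_plus. exact H2. apply derC_cmul. apply derC_plus. exact H1. apply derC_const.
    apply derC_exp.
    rewrite (Hg2 z Hz). change (@zero C_R_NormedModule) with (RtoC 0).
    match goal with |- ?x = _ => change (@eq C x (RtoC 0)) end.
    rewrite <- hkk. field. auto. }
  assert (DF2 : forall z, (0 < z < a)%R -> is_derive F2 z zero).
  { intros z Hz. destruct (Hd z Hz) as [H1 [H2 H3]]. unfold F2. eapply is_derive_val.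
    apply derC_mult. apply derC_plus. exact H2. apply derC_cmul. apply derC_plus. exact H1. apply derC_const.
    apply derC_exp.
    rewrite (Hg2 z Hz).
    match goal with |- ?x = _ => change (@eq C x (RtoC 0)) end.
    rewrite <- hkk. field. auto. }
  exists ((F (a/2)%R) / (RtoC 2 * k)), (- (F2 (a/2)%R) / (RtoC 2 * k)).
  intros z Hz.
  rewrite <- (const_on F a ha DF z Hz), <- (const_on F2 a ha DF2 z Hz).
  unfold F, F2, Q.
  assert (HE := cexp_inv k z).
  set (E := cexp k z) in *. set (Em := cexp (-k) z) in *.
  transitivity (/ w + ((g1 z + k * (g z - / w)) - (g1 z + - k * (g z - / w))) * (E * Em) / (RtoC 2 * k)).
  - rewrite HE. field. auto.
  - field. auto.
Qed.

Close Scope C_scope.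
Open Scope R_scope.

Lemma Cmod_le_sum (z : C) : Cmod z <= Rabs (fst z) + Rabs (snd z).
Proof.
  destruct z as [x y]. unfold Cmod; cbn [fst snd].
  rewrite <- (sqrt_pow2 (Rabs x + Rabs y)) by (assert (0 <= Rabs x) by apply Rabs_pos; assert (0 <= Rabs y) by apply Rabs_pos; lra).
  apply sqrt_le_1_alt.
  rewrite <- (pow2_abs x), <- (pow2_abs y).
  assert (0 <= Rabs x) by apply Rabs_pos; assert (0 <= Rabs y) by apply Rabs_pos. nra.
Qed.

Lemma sum_le_Cmod (z : C) : Rabs (fst z) + Rabs (snd z) <= 2 * Cmod z.
Proof.
  destruct z as [x y]. unfold Cmod; cbn [fst snd].
  assert (Rabs x <= sqrt (x^2+y^2)).
  { rewrite <- (sqrt_pow2 (Rabs x)) by apply Rabs_pos. apply sqrt_le_1_alt. rewrite pow2_abs. assert (0 <= x^2) by apply pow2_ge_0. assert (0 <= y^2) by apply pow2_ge_0. lra. }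
  assert (Rabs y <= sqrt (x^2+y^2)).
  { rewrite <- (sqrt_pow2 (Rabs y)) by apply Rabs_pos. apply sqrt_le_1_alt. rewrite pow2_abs. assert (0 <= x^2) by apply pow2_ge_0. assert (0 <= y^2) by apply pow2_ge_0. lra. }
  lra.
Qed.

Lemma contQ k c0 c1 c2 x : continuous (Q k c0 c1 c2) x.
Proof.
  apply (ex_derive_continuous (K:=R_AbsRing) (V:=C_R_NormedModule)). eexists. apply dQ.
Qed.

Lemma derQfst k c0 c1 c2 x : is_derive (fun t => fst (Q k c0 c1 c2 t)) x (fst (Q k (RtoC 0) (k*c1)%C (-k*c2)%C x)).
Proof. apply derC_fst, dQ. Qed.
Lemma derQsnd k c0 c1 c2 x : is_derive (fun t => snd (Q k c0 c1 c2 t)) x (snd (Q k (RtoC 0) (k*c1)%C (-k*c2)%C x)).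
Proof. apply derC_snd, dQ. Qed.

Lemma contR' (f : R -> R) x : ex_derive f x -> continuous f x.
Proof. apply (ex_derive_continuous (K:=R_AbsRing) (V:=R_NormedModule)). Qed.

Lemma RInt_Q k c0 c1 c2 a :
  @RInt C_R_CompleteNormedModule (Q k c0 c1 c2) 0 a =
  (RInt (fun t => fst (Q k c0 c1 c2 t)) 0 a, RInt (fun t => snd (Q k c0 c1 c2 t)) 0 a).
Proof.
  apply is_RInt_unique.
  apply (is_RInt_fct_extend_pair (U:=R_NormedModule) (V:=R_NormedModule)).
  - apply (RInt_correct (V:=R_CompleteNormedModule)). apply (ex_RInt_continuous (V:=R_CompleteNormedModule)).
    intros; apply contR'; eexists; apply derQfst.
  - apply (RInt_correct (V:=R_CompleteNormedModule)). apply (ex_RInt_continuous (V:=R_CompleteNormedModule)).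
    intros; apply contR'; eexists; apply derQsnd.
Qed.

Lemma est (a nu d1 : R) (w k c1 c2 : C) :
  0 < a -> 0 < nu -> 0 < d1 -> w <> RtoC 0 -> (RtoC nu * (k * k))%C = w ->
  (fst w < 0 -> - fst w <= d1 * Rabs (snd w)) -> 0 < Rabs (fst w) + Rabs (snd w) ->
  Q k (/ w)%C c1 c2 0 = RtoC 0 -> Q k (/ w)%C c1 c2 a = RtoC 0 ->
  Cmod (@RInt C_R_CompleteNormedModule (Q k (/ w)%C c1 c2) 0 a) <= 4*a*(1+d1)/(Rabs (fst w) + Rabs (snd w)) /\
  a^3/12 <= (3*a^2/16*(1+d1)*(Rabs (fst w) + Rabs (snd w)) + 2*nu) * (2 * Cmod (@RInt C_R_CompleteNormedModule (Q k (/ w)%C c1 c2) 0 a)).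
Proof.
  intros ha hnu hd1 hw hk hsec hP H0 Ha.
  set (Q0 := Q k (/ w)%C c1 c2).
  set (Q1 := Q k (RtoC 0) (k*c1)%C (-k*c2)%C).
  set (Q2 := Q k (RtoC 0) (k*(k*c1))%C (-k*(-k*c2))%C).
  set (Q3 := Q k (RtoC 0) (k*(k*(k*c1)))%C (-k*(-k*(-k*c2)))%C).
  assert (Eq : forall x, (w * Q0 x - RtoC nu * Q2 x)%C = RtoC 1) by (intros; apply Q_eq; auto).
  assert (Eu : forall x, fst w * fst (Q0 x) - snd w * snd (Q0 x) - nu * fst (Q2 x) = 1).
  { intros x. generalize (f_equal fst (Eq x)). destruct (Q0 x), (Q2 x), w. simpl. intros E; rewrite <- E; ring. }
  assert (Ev : forall x, fst w * snd (Q0 x) + snd w * fst (Q0 x) - nu * snd (Q2 x) = 0).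
  { intros x. generalize (f_equal snd (Eq x)). destruct (Q0 x), (Q2 x), w. simpl. intros E; rewrite <- E; ring. }
  assert (Hs := sum_le_Cmod (@RInt C_R_CompleteNormedModule Q0 0 a)).
  assert (Hc := Cmod_le_sum (@RInt C_R_CompleteNormedModule Q0 0 a)).
  unfold Q0 in Hs, Hc. rewrite RInt_Q in Hs, Hc. cbn [fst snd] in Hs, Hc. fold Q0 in Hs, Hc.
  assert (B0u : fst (Q0 0) = 0) by (unfold Q0; rewrite H0; reflexivity).
  assert (B0v : snd (Q0 0) = 0) by (unfold Q0; rewrite H0; reflexivity).
  assert (Bau : fst (Q0 a) = 0) by (unfold Q0; rewrite Ha; reflexivity).
  assert (Bav : snd (Q0 a) = 0) by (unfold Q0; rewrite Ha; reflexivity).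
  unfold Q0; rewrite RInt_Q; fold Q0.
  split.
  - eapply Rle_trans. apply Hc.
    apply (Cup a nu (fst w) (snd w) (fun t => fst (Q0 t)) (fun t => snd (Q0 t))
      (fun t => fst (Q1 t)) (fun t => snd (Q1 t)) (fun t => fst (Q2 t)) (fun t => snd (Q2 t))
      (fun t => fst (Q3 t)) (fun t => snd (Q3 t))); auto;
      intros; first [apply derQfst | apply derQsnd].
  - eapply Rle_trans.
    apply (Clow a nu (fst w) (snd w) (fun t => fst (Q0 t)) (fun t => snd (Q0 t))
      (fun t => fst (Q1 t)) (fun t => snd (Q1 t)) (fun t => fst (Q2 t)) (fun t => snd (Q2 t))
      (fun t => fst (Q3 t)) (fun t => snd (Q3 t))) with (d1 := d1); auto;
      intros; first [apply derQfst | apply derQsnd].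
    apply Rmult_le_compat_l. assert (0 < a^2) by (apply pow_lt; lra).
    assert (0 < 3 * a ^ 2 / 16 * (1 + d1) * (Rabs (fst w) + Rabs (snd w))).
    { apply Rmult_lt_0_compat; [|lra]. apply Rmult_lt_0_compat; [|lra]. lra. }
    lra.
    exact Hs.
Qed.

Close Scope C_scope.
Open Scope R_scope.

Lemma ball_R (x e y : R) : ball x e y -> Rabs (y - x) < e.
Proof. intros H. exact H. Qed.

Lemma bd_left (f h : R -> C) a : 0 < a -> continuous f 0 -> continuous h 0 ->
  (forall z, 0 < z < a -> f z = h z) -> f 0 = h 0.
Proof.
  intros ha Hf Hh E.
  apply (filterlim_locally_unique (K:=R_AbsRing) (V:=C_R_NormedModule) (F := at_right 0) f).
  - eapply filterlim_filter_le_1; [|exact Hf].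
    intros P HP. unfold at_right, within. apply (filter_imp P); auto.
  - eapply filterlim_ext_loc; [|eapply filterlim_filter_le_1; [|exact Hh]].
    + unfold at_right, within, locally. exists (mkposreal a ha). intros y Hy Hy0.
      apply ball_R in Hy. simpl in Hy. symmetry. apply E. split; auto.
      rewrite Rminus_0_r in Hy. apply Rabs_def2 in Hy. lra.
    + intros P HP. unfold at_right, within. apply (filter_imp P); auto.
Qed.

Lemma bd_right (f h : R -> C) a : 0 < a -> continuous f a -> continuous h a ->
  (forall z, 0 < z < a -> f z = h z) -> f a = h a.
Proof.
  intros ha Hf Hh E.
  apply (filterlim_locally_unique (K:=R_AbsRing) (V:=C_R_NormedModule) (F := at_left a) f).
  - eapply filterlim_filter_le_1; [|exact Hf].
    intros P HP. unfold at_left, within. apply (filter_imp P); auto.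
  - eapply filterlim_ext_loc; [|eapply filterlim_filter_le_1; [|exact Hh]].
    + unfold at_left, within, locally. exists (mkposreal a ha). intros y Hy Hy0.
      apply ball_R in Hy. simpl in Hy. symmetry. apply E. split; auto.
      apply Rabs_def2 in Hy. lra.
    + intros P HP. unfold at_left, within. apply (filter_imp P); auto.
Qed.

Lemma absf x : x <= Rabs x /\ - x <= Rabs x /\ 0 <= Rabs x.
Proof. split. apply Rle_abs. split. rewrite <- Rabs_Ropp. apply Rle_abs. apply Rabs_pos. Qed.

Lemma sector (nu d1 d2 mu1 mu2 n p q : R) :
  0 < nu -> 0 < d1 -> d2 < nu/2 -> 1 <= n -> Rabs mu2 >= mu1 / d1 ->
  p = - d2 - mu1 + nu * n -> q = mu2 ->
  (p < 0 -> - p <= d1 * Rabs q) /\ (q = 0 -> 0 < p) /\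
  Rabs mu1 <= (1 + d1) * (Rabs p + Rabs q) /\ Rabs mu2 <= Rabs p + Rabs q /\
  nu * n <= (4 + 4*d1) * (Rabs p + Rabs q).
Proof.
  intros hnu hd1 hd2 hn Hmu Ep Eq.
  assert (Hm : mu1 <= d1 * Rabs mu2).
  { apply Rge_le in Hmu. apply (Rmult_le_compat_l d1) in Hmu; [|lra].
    replace (d1 * (mu1 / d1)) with mu1 in Hmu by (field; lra). lra. }
  subst q.
  destruct (absf p) as [Ap1 [Ap2 Ap3]]. destruct (absf mu2) as [Aq1 [Aq2 Aq3]].
  assert (Hnn : nu <= nu * n) by nra.
  assert (Hd1q : 0 <= d1 * Rabs mu2) by nra.
  split; [|split; [|split; [|split]]].
  - intros hp. lra.
  - intros h0. rewrite h0, Rabs_R0 in Hm. lra.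
  - destruct (Rle_dec mu1 0).
    + rewrite Rabs_left1 by lra. nra.
    + rewrite Rabs_right by lra. nra.
  - lra.
  - destruct (Rle_dec mu1 (nu * n / 4)). nra. nra.
Qed.

Lemma ksqrt (nu : R) (w : C) : 0 < nu -> (snd w = 0 -> 0 < fst w) ->
  exists k : C, (RtoC nu * (k * k))%C = w /\ 0 < fst k.
Proof.
  intros hnu hw.
  set (mr := fst w / nu). set (mi := snd w / nu).
  set (m := sqrt (mr^2 + mi^2)).
  assert (Hm2 : m * m = mr^2 + mi^2) by (apply sqrt_sqrt; nra).
  assert (Hm0 : 0 <= m) by apply sqrt_pos.
  assert (Hpos : 0 < m + mr).
  { destruct (Req_dec mi 0) as [h|h].
    - assert (snd w = 0). { unfold mi in h. apply (Rmult_eq_compat_r nu) in h. unfold Rdiv in h.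
        rewrite Rmult_assoc, Rinv_l, Rmult_1_r, Rmult_0_l in h by lra. exact h. }
      assert (0 < mr) by (unfold mr; apply Rdiv_lt_0_compat; auto). lra.
    - assert (mr^2 < m*m) by (rewrite Hm2; assert (0 < mi^2) by (apply pow2_gt_0; auto); lra).
      nra. }
  set (al := sqrt ((m + mr)/2)).
  assert (Hal : al * al = (m + mr)/2) by (apply sqrt_sqrt; lra).
  assert (Hal0 : 0 < al) by (apply sqrt_lt_R0; lra).
  exists (al, mi / (2 * al)). split; [|simpl; lra].
  apply Ceq; unfold Cmult, RtoC; cbn [fst snd].
  - replace (al * al - mi / (2 * al) * (mi / (2 * al))) with (al * al - mi^2 / (4 * (al * al))) by (field; lra).
    rewrite Hal.
    replace (mi^2) with (m*m - mr^2) by lra.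
    replace (nu * ((m + mr) / 2 - (m * m - mr ^ 2) / (4 * ((m + mr) / 2))) - 0 * (al * (mi / (2 * al)) + mi / (2 * al) * al))
      with (nu * mr) by (field; lra).
    unfold mr; field; lra.
  - replace (nu * (al * (mi / (2 * al)) + mi / (2 * al) * al) + 0 * (al * al - mi / (2 * al) * (mi / (2 * al))))
      with (nu * mi) by (field; lra).
    unfold mi; field; lra.
Qed.

Lemma cexp0 k : cexp k 0 = RtoC 1.
Proof. unfold cexp. apply Ceq; cbn [fst snd RtoC]; rewrite !Rmult_0_r, exp_0; [rewrite cos_0 | rewrite sin_0]; ring. Qed.

Lemma bc_sol (a : R) (w k : C) : 0 < a -> 0 < fst k -> w <> RtoC 0 ->
  exists c1 c2, Q k (/ w)%C c1 c2 0 = RtoC 0 /\ Q k (/ w)%C c1 c2 a = RtoC 0.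
Proof.
  intros ha hk hw.
  set (E := cexp k a). set (Em := cexp (- k) a).
  assert (HE : (E * Em)%C = RtoC 1) by apply cexp_inv.
  assert (HE1 : (E + RtoC 1)%C <> RtoC 0).
  { intros H. assert (H1 := f_equal fst H). assert (H2 := f_equal snd H).
    unfold E, cexp, Cplus, RtoC in H1, H2; cbn [fst snd] in H1, H2.
    assert (Hx : 1 < exp (fst k * a)) by (rewrite <- exp_0; apply exp_increasing; nra).
    assert (Hsc := sin2_cos2 (snd k * a)). unfold Rsqr in Hsc.
    assert (exp (fst k * a) * cos (snd k * a) = -1) by lra.
    assert (exp (fst k * a) * sin (snd k * a) = 0) by lra.
    assert (Hsq : (exp (fst k * a))^2 * (sin (snd k * a) * sin (snd k * a) + cos (snd k * a) * cos (snd k * a)) = 1) by nra.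
    rewrite Hsc in Hsq. nra. }
  exists (- / (w * (E + RtoC 1)))%C, (- E / (w * (E + RtoC 1)))%C.
  split; unfold Q.
  - rewrite !cexp0. field. auto.
  - fold E Em.
    transitivity (/ w - (E + E * Em) / (w * (E + RtoC 1)))%C.
    + field. auto.
    + rewrite HE. field. auto.
Qed.

Close Scope C_scope.
Open Scope R_scope.

Lemma IZR_sq_ge1 (z : Z) : z <> 0%Z -> 1 <= IZR z ^ 2.
Proof.
  intros H. destruct (Z.lt_total z 0) as [h|[h|h]].
  - assert (IZR z <= -1) by (apply IZR_le; lia). nra.
  - contradiction.
  - assert (1 <= IZR z) by (apply IZR_le; lia). nra.
Qed.

Lemma zeta_ge1 z1 z2 : (z1, z2) <> (0%Z, 0%Z) -> 1 <= zeta_sq z1 z2.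
Proof.
  intros H. unfold zeta_sq.
  assert (0 <= IZR z1 ^ 2) by apply pow2_ge_0. assert (0 <= IZR z2 ^ 2) by apply pow2_ge_0.
  destruct (Z.eq_dec z1 0) as [h1|h1].
  - destruct (Z.eq_dec z2 0) as [h2|h2]. subst; contradiction.
    assert (G2 := IZR_sq_ge1 _ h2). lra.
  - assert (G1 := IZR_sq_ge1 _ h1). lra.
Qed.

Theorem lemma10 :
  forall (a nu d1 d2 : R),
    0 < a -> 0 < nu -> 0 < d1 ->
    d2 < Rmin (nu * PI ^ 2 / (2 * a ^ 2)) (nu / 2) ->
    exists C1 C2 : R, 0 < C1 /\ 0 < C2 /\
      forall (lam : C) (z1 z2 : Z),
        in_S d1 d2 lam -> (z1, z2) <> (0%Z, 0%Z) ->
        (exists g, dirichlet_sol a nu (omega2 nu lam z1 z2) g) /\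
        (forall g, dirichlet_sol a nu (omega2 nu lam z1 z2) g ->
           C1 / jomega2 lam z1 z2 <= Cmod (cint a g) <= C2 / jomega2 lam z1 z2).
Proof.
  intros a nu d1 d2 ha hnu hd1 hd2.
  assert (hd2' : d2 < nu / 2) by (eapply Rlt_le_trans; [exact hd2 | apply Rmin_r]).
  set (K1 := Rmax (3*a^2/16*(1+d1)) 2).
  set (Kn := Rmax 2 nu).
  set (Ku := (2 + d1) + (Rabs d2 + 4)*(4+4*d1)/nu).
  assert (hK1 : 2 <= K1) by apply Rmax_r.
  assert (hK1' : 3*a^2/16*(1+d1) <= K1) by apply Rmax_l.
  assert (hKn : 2 <= Kn) by apply Rmax_l.
  assert (hKn' : nu <= Kn) by apply Rmax_r.
  assert (hKu : 0 < Ku).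
  { unfold Ku. assert (0 <= Rabs d2) by apply Rabs_pos.
    assert (0 < (Rabs d2 + 4) * (4 + 4 * d1) / nu) by (apply Rdiv_lt_0_compat; nra). lra. }
  exists (a^3/(24*K1*Kn)), (4*a*(1+d1)*Ku).
  split. { apply Rdiv_lt_0_compat. apply pow_lt; lra. nra. }
  split. { assert (0 < 4*a*(1+d1)) by nra. nra. }
  intros lam z1 z2 [mu1 [mu2 [Hl Hmu]]] Hz.
  set (n := zeta_sq z1 z2).
  assert (hn : 1 <= n) by (apply zeta_ge1; auto).
  set (w := omega2 nu lam z1 z2).
  assert (Ew1 : fst w = fst lam + nu * n) by (unfold w, omega2, Cplus, RtoC; reflexivity).
  assert (Ew2 : snd w = snd lam) by (unfold w, omega2, Cplus, RtoC; cbn [fst snd]; ring).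
  assert (El1 : fst lam = - d2 - mu1) by (rewrite Hl; reflexivity).
  assert (El2 : snd lam = mu2) by (rewrite Hl; reflexivity).
  destruct (sector nu d1 d2 mu1 mu2 n (fst w) (snd w)) as [hsec [hq0 [hb1 [hb2 hb3]]]]; auto.
  { rewrite Ew1, El1; ring. } { rewrite Ew2, El2; ring. }
  assert (hP : 0 < Rabs (fst w) + Rabs (snd w)).
  { destruct (Req_dec (snd w) 0) as [h|h].
    - specialize (hq0 h). rewrite h, Rabs_R0, Rabs_right by lra. lra.
    - assert (0 < Rabs (snd w)) by (apply Rabs_pos_lt; auto). assert (0 <= Rabs (fst w)) by apply Rabs_pos. lra. }
  assert (hw : w <> RtoC 0).
  { intros E. rewrite E in hP. cbn [fst snd RtoC] in hP. rewrite Rabs_R0 in hP. lra. }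
  destruct (ksqrt nu w hnu hq0) as [k [hk hk0]].
  assert (hkn0 : k <> RtoC 0) by (intros E; rewrite E in hk0; simpl in hk0; lra).
  split.
  - destruct (bc_sol a w k ha hk0 hw) as [c1 [c2 [B0 Ba]]].
    exists (Q k (/ w)%C c1 c2). unfold dirichlet_sol. split; [|split; [|split]].
    + intros; apply contQ.
    + exact B0.
    + exact Ba.
    + exists (Q k (RtoC 0) (k*c1)%C (-k*c2)%C), (Q k (RtoC 0) (k*(k*c1))%C (-k*(-k*c2))%C).
      intros z _. split; [apply dQ|split;[apply dQ|apply Q_eq; auto]].
  - intros g [Hc [H0 [Ha [g1 [g2 Hd]]]]].
    destruct (rep a nu w k g g1 g2 ha ltac:(lra) hw hkn0 hk Hd) as [c1 [c2 Hrep]].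
    assert (B0 : Q k (/ w)%C c1 c2 0 = RtoC 0).
    { rewrite <- H0. symmetry. apply (bd_left g (Q k (/ w)%C c1 c2) a); auto. apply Hc; lra. apply contQ. }
    assert (Ba : Q k (/ w)%C c1 c2 a = RtoC 0).
    { rewrite <- Ha. symmetry. apply (bd_right g (Q k (/ w)%C c1 c2) a); auto. apply Hc; lra. apply contQ. }
    assert (Ecint : cint a g = @RInt C_R_CompleteNormedModule (Q k (/ w)%C c1 c2) 0 a).
    { unfold cint. apply (RInt_ext (V:=C_R_CompleteNormedModule)). intros x Hx. rewrite Rmin_left, Rmax_right in Hx by lra. apply Hrep; auto. }
    rewrite Ecint.
    destruct (est a nu d1 w k c1 c2) as [Hup Hlow]; auto.
    set (I := Cmod (@RInt C_R_CompleteNormedModule (Q k (/ w)%C c1 c2) 0 a)) in *.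
    set (P := Rabs (fst w) + Rabs (snd w)) in *.
    assert (HI : 0 <= I) by apply Cmod_ge_0.
    set (s := sqrt n).
    assert (Hs0 : 0 <= s) by apply sqrt_pos.
    assert (Hss : s * s = n) by (apply sqrt_sqrt; lra).
    assert (Hs1 : s <= n) by nra.
    assert (EJ : jomega2 lam z1 z2 = Cmod lam + (1 + s)^2) by reflexivity.
    assert (HCl := Cmod_le_sum lam). assert (HCl2 := sum_le_Cmod lam).
    rewrite El1, El2 in HCl, HCl2.
    assert (Hd2m : Rabs (- d2 - mu1) <= Rabs d2 + Rabs mu1).
    { destruct (absf d2) as [? [? ?]]. destruct (absf mu1) as [? [? ?]]. apply Rabs_le. lra. }
    assert (HJup : jomega2 lam z1 z2 <= Ku * P).
    { rewrite EJ. assert (0 <= Rabs d2) by apply Rabs_pos.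
      assert (Rabs d2 <= Rabs d2 * n) by nra.
      assert (Hn2 : n <= (4 + 4 * d1) * P / nu).
      { apply (Rmult_le_reg_l nu); auto. replace (nu * ((4 + 4 * d1) * P / nu)) with ((4 + 4 * d1) * P) by (field; lra). lra. }
      assert ((Rabs d2 + 4) * n <= (Rabs d2 + 4) * ((4 + 4 * d1) * P / nu)) by (apply Rmult_le_compat_l; lra).
      unfold Ku. replace (((2 + d1) + (Rabs d2 + 4) * (4 + 4 * d1) / nu) * P) with
        ((2 + d1) * P + (Rabs d2 + 4) * ((4 + 4 * d1) * P / nu)) by (field; lra).
      nra. }
    assert (HJlow : P + nu <= Kn * jomega2 lam z1 z2).
    { rewrite EJ. unfold P. rewrite Ew1, Ew2, El1, El2.
      assert (Rabs (- d2 - mu1 + nu * n) <= Rabs (- d2 - mu1) + nu * n).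
      { destruct (absf (- d2 - mu1)) as [? [? ?]]. apply Rabs_le. nra. }
      assert (0 <= Cmod lam) by apply Cmod_ge_0.
      nra. }
    assert (HJ : 0 < jomega2 lam z1 z2) by (rewrite EJ; assert (0 <= Cmod lam) by apply Cmod_ge_0; nra).
    set (J := jomega2 lam z1 z2) in *.
    split.
    + assert (Hl2 : a^3/12 <= K1 * Kn * J * (2 * I)).
      { eapply Rle_trans. exact Hlow. apply Rmult_le_compat_r. lra.
        assert (3 * a ^ 2 / 16 * (1 + d1) * P <= K1 * P) by (apply Rmult_le_compat_r; lra).
        assert (K1 * (P + nu) <= K1 * (Kn * J)) by (apply Rmult_le_compat_l; lra).
        nra. }
      assert (0 < K1 * Kn * J) by (apply Rmult_lt_0_compat; [apply Rmult_lt_0_compat|]; lra).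
      replace (a ^ 3 / (24 * K1 * Kn) / J) with ((a^3/12) / (2 * (K1 * Kn * J))) by (field; repeat split; lra).
      unfold Rdiv at 1. apply (Rmult_le_reg_r (2 * (K1 * Kn * J))). lra.
      rewrite Rmult_assoc, Rinv_l, Rmult_1_r by lra. nra.
    + eapply Rle_trans. exact Hup.
      replace (4 * a * (1 + d1) / P) with (4 * a * (1 + d1) * Ku * / (Ku * P)) by (field; lra).
      unfold Rdiv. apply Rmult_le_compat_l. assert (0 < 4 * a * (1+d1)) by nra. nra.
      apply Rinv_le_contravar; auto.
Qed.
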